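(* Let $p,q\ge 1$ be integers. Let $\mu=(\mu_1,\dots,\mu_p)$ and $\nu=(\nu_1,\dots,\nu_q)$ be independent random probability vectors, with $\mu$ uniformly distributed on the probability simplex $\{\mu\in[0,1]^p:\sum_u\mu_u=1\}$ (Dirichlet law $\mathcal D_p$ with all parameters equal to $1$) and $\nu$ uniformly distributed on the probability simplex in $\mathbb{R}^q$ (Dirichlet law $\mathcal D_q$). Define $$\Delta=\mathbb{E}\left[\sum_{u=1}^p\sum_{v=1}^q\Big(\mu_u\nu_v-\Big(\frac{\mu_u}{q}+\frac{\nu_v}{p}-\frac{1}{pq}\Big)\Big)^2\right].$$ Then $$\Delta=\frac{1}{pq}\cdot\frac{p-1}{p+1}\cdot\frac{q-1}{q+1}\le\frac{1}{pq}.$$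
   Context: For margins $\mu,\nu$, the independence coupling is $(\mu\otimes\nu)_{u,v}=\mu_u\nu_v$ and the indetermination coupling is $(\mu\oplus\nu)_{u,v}=\frac{\mu_u}{q}+\frac{\nu_v}{p}-\frac{1}{pq}$; $\Delta$ is the expected squared Euclidean distance between them. *)

(* Defs.v *)
From Stdlib Require Import Reals List Arith Factorial.
From Coquelicot Require Import Coquelicot.
Import ListNotations.
Open Scope R_scope.

Definition sumR (n : nat) (f : nat -> R) : R :=
  fold_right Rplus 0 (map f (seq 0 n)).

(* simplex_int n G s = integral of G(x_1,...,x_n) over the region
   { x_i >= 0, x_1 + ... + x_n <= s }  (iterated Riemann integral;
   the integral over the 0-dimensional region is evaluation at []). *)
Fixpoint simplex_int (n : nat) (G : list R -> R) (s : R) : R :=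
  match n with
  | O => G nil
  | S m => RInt (fun t => simplex_int m (fun xs => G (t :: xs)) (s - t)) 0 s
  end.

(* Expectation of g(mu) for mu ~ D_p = Dirichlet(1,...,1), i.e. uniform on
   the probability simplex of R^p (p >= 1).  The law is given by its
   standard density: (mu_1,...,mu_{p-1}) has density (p-1)! on
   { x_i >= 0, sum x_i <= 1 } and mu_p = 1 - (mu_1 + ... + mu_{p-1}).
   A vector mu is represented as a list of length p, mu_u = nth (u-1) mu 0. *)
Definition dirichlet_expect (p : nat) (g : list R -> R) : R :=
  INR (Factorial.fact (p - 1)) *
  simplex_int (p - 1) (fun xs => g (xs ++ [1 - fold_right Rplus 0 xs])) 1.

Definition sq_dist_couplings (p q : nat) (mu nu : list R) : R :=
  sumR p (fun u => sumR q (fun v =>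
    (nth u mu 0 * nth v nu 0
     - (nth u mu 0 / INR q + nth v nu 0 / INR p - 1 / (INR p * INR q))) ^ 2)).

(* Delta: expectation for independent mu ~ D_p, nu ~ D_q
   (product law, i.e. iterated expectation). *)
Definition Delta_pq (p q : nat) : R :=
  dirichlet_expect p (fun mu => dirichlet_expect q (fun nu => sq_dist_couplings p q mu nu)).

(* Main.v *)
Require Import Defs.
From Stdlib Require Import Reals List.
From Coquelicot Require Import Coquelicot.
Open Scope R_scope.
From Stdlib Require Import Lra Lia Factorial.
Import ListNotations.
Lemma poly_int m c d K s :
  RInt (fun t => (c + d*t^2) * (s-t)^m / INR (fact m) + K * (s-t)^(S(S m)) / INR(fact (S (S m)))) 0 s
  = c * s^(S m)/INR(fact (S m)) + (2*d + K) * s^(S(S(S m)))/INR(fact (S(S(S m)))).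
Proof.
  pose (F := fun t => -( c * (s-t)^(S m)/INR (fact(S m)) + d*(t^2*(s-t)^(S m)/INR(fact(S m)) + 2*t*(s-t)^(S(S m))/INR(fact(S(S m))) + 2*(s-t)^(S(S(S m)))/INR(fact(S(S(S m))))) + K*(s-t)^(S(S(S m)))/INR(fact(S(S(S m)))) )).
  pose proof (INR_fact_neq_0 m) as HF.
  rewrite (is_RInt_unique _ 0 s (minus (F s) (F 0))).
  - unfold F, minus, plus, opp; cbn -[fact INR].
    rewrite !fact_simpl, !mult_INR, !S_INR.
    replace (s - s) with 0 by ring.
    rewrite Rminus_0_r. set (fm := INR (fact m)); set (M := INR m); set (sm := s ^ m); set (zm := 0 ^ m). field. pose proof (pos_INR m). unfold M. repeat split; try lra; auto.
  - apply (is_RInt_derive (V:=R_CompleteNormedModule) F).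
    + intros x _. unfold F. auto_derive; [tauto|].
      assert (HM: match m with 0%nat => 1 | S _ => INR m + 1 end = INR m + 1) by (destruct m; simpl; lra). rewrite ?HM. rewrite ?fact_simpl. repeat (rewrite plus_INR || rewrite mult_INR || rewrite S_INR). unfold Rminus. change ((s + -x)^(S (S m))) with ((s + -x) * ((s + -x) * (s + -x)^m)). set (fm := INR (fact m)); set (M := INR m); set (um := (s + - x) ^ m). field. unfold M; pose proof (pos_INR m). assert (0 < fm) by (apply lt_0_INR, lt_O_fact). assert (0 <= INR m * fm) by nra. assert (0 <= INR m * (INR m * fm)) by nra. assert (0 <= INR m * (INR m * (INR m * fm))) by nra. repeat split; nra.
    + intros y _. apply (ex_derive_continuous (K:=R_AbsRing) (V:=R_NormedModule)). auto_derive. tauto.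
Qed.

Definition sm (xs : list R) : R := fold_right Rplus 0 xs.
Definition sq (xs : list R) : R := fold_right Rplus 0 (map (fun x => x^2) xs).

Lemma simplex_ext n : forall G1 G2 s,
  (forall xs, length xs = n -> G1 xs = G2 xs) -> simplex_int n G1 s = simplex_int n G2 s.
Proof.
  induction n as [|m IH]; intros G1 G2 s H; simpl.
  - apply H; reflexivity.
  - apply RInt_ext; intros t _. apply IH. intros xs Hl. apply H. simpl. rewrite Hl. reflexivity.
Qed.

Lemma key n : forall c d e s,
  simplex_int n (fun xs => c + d * sq xs + e * (s - sm xs)^2) s
  = c * s^n / INR (fact n) + (2*d*INR n + 2*e) * s^(S (S n)) / INR (fact (S (S n))).
Proof.
  induction n as [|m IH]; intros c d e s.
  - simpl. unfold sq, sm; simpl. field.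
  - cbn [simplex_int].
    rewrite (RInt_ext _ (fun t => (c + d*t^2) * (s-t)^m / INR (fact m) + (2*d*INR m + 2*e) * (s-t)^(S(S m)) / INR(fact (S (S m))))).
    + rewrite poly_int. rewrite S_INR. set (A := s ^ S m). set (B := s ^ S (S (S m))). set (F1 := INR (fact (S m))). set (F3 := INR (fact (S (S (S m))))). unfold Rdiv; ring.
    + intros t _.
      transitivity (simplex_int m (fun xs => (c + d*t^2) + d*sq xs + e*((s-t) - sm xs)^2) (s-t)).
      * apply simplex_ext. intros xs _. unfold sq, sm; simpl. ring.
      * apply IH.
Qed.

Lemma sumR_S n f : sumR (S n) f = f 0%nat + sumR n (fun i => f (S i)).
Proof. unfold sumR. simpl. f_equal. rewrite <- seq_shift, map_map. reflexivity. Qed.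

Lemma sumR_app xs y f : forall n, n = (length xs + 1)%nat ->
  sumR n (fun u => f (nth u (xs ++ [y]) 0)) = fold_right Rplus 0 (map f xs) + f y.
Proof.
  induction xs as [|x xs IH]; intros n Hn; subst n.
  - unfold sumR; simpl. ring.
  - simpl length. replace (S (length xs) + 1)%nat with (S (length xs + 1)) by lia. rewrite sumR_S. simpl. rewrite (IH (length xs + 1)%nat) by reflexivity. ring.
Qed.

Lemma sumR_multr n c f : sumR n (fun i => f i * c) = sumR n f * c.
Proof. unfold sumR. induction (seq 0 n) as [|a l IH]; simpl; [ring | rewrite IH; ring]. Qed.

Lemma sumR_multl n c f : sumR n (fun i => c * f i) = c * sumR n f.
Proof. unfold sumR. induction (seq 0 n) as [|a l IH]; simpl; [ring | rewrite IH; ring]. Qed.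

Lemma sumR_ext n f g : (forall i, f i = g i) -> sumR n f = sumR n g.
Proof. intros H. unfold sumR. rewrite (map_ext f g H). reflexivity. Qed.

Lemma factor p q mu nu : INR p <> 0 -> INR q <> 0 ->
  sq_dist_couplings p q mu nu =
  sumR p (fun u => (nth u mu 0 - 1/INR p)^2) * sumR q (fun v => (nth v nu 0 - 1/INR q)^2).
Proof.
  intros Hp Hq. unfold sq_dist_couplings.
  rewrite <- sumR_multr. apply sumR_ext. intros u.
  rewrite <- sumR_multl. apply sumR_ext. intros v. field. auto.
Qed.

Lemma sum_sq_shift a xs :
  fold_right Rplus 0 (map (fun x => (x - a)^2) xs) = sq xs - 2*a*sm xs + INR (length xs) * a^2.
Proof.
  induction xs as [|x xs IH]; unfold sq, sm in *; cbn [fold_right map length]; [change (INR 0) with 0; ring|].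
  rewrite IH. rewrite S_INR. ring.
Qed.

Lemma dexp_ext p g1 g2 : (forall mu, g1 mu = g2 mu) -> dirichlet_expect p g1 = dirichlet_expect p g2.
Proof. intros H. unfold dirichlet_expect. f_equal. apply simplex_ext. intros; apply H. Qed.

Lemma dexp n a :
  dirichlet_expect (S n) (fun mu => a * sumR (S n) (fun u => (nth u mu 0 - 1/INR (S n))^2))
  = a * (INR n / (INR (S n) * INR (S (S n)))).
Proof.
  unfold dirichlet_expect. replace (S n - 1)%nat with n by lia.
  rewrite (simplex_ext n _ (fun xs => (- a / INR (S n)) + a * sq xs + a * (1 - sm xs)^2)).
  - rewrite key. rewrite !pow1. rewrite !fact_simpl, !mult_INR, !S_INR.
    pose proof (INR_fact_neq_0 n). pose proof (pos_INR n).
    field. repeat split; try lra; auto.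
  - intros xs Hl.
    rewrite (sumR_app xs _ (fun x => (x - 1 / INR (S n))^2) (S n)) by lia.
    rewrite sum_sq_shift. rewrite Hl. unfold sm. rewrite S_INR.
    pose proof (pos_INR n). field. lra.
Qed.

Theorem mainTheorem1 (p q : nat) (hp : (1 <= p)%nat) (hq : (1 <= q)%nat) :
  Delta_pq p q = 1 / (INR p * INR q) * ((INR p - 1) / (INR p + 1)) * ((INR q - 1) / (INR q + 1))
  /\ Delta_pq p q <= 1 / (INR p * INR q).
Proof.
  assert (HD : Delta_pq p q = 1 / (INR p * INR q) * ((INR p - 1) / (INR p + 1)) * ((INR q - 1) / (INR q + 1))).
  { destruct p as [|n]; [lia|]. destruct q as [|k]; [lia|].
    pose proof (pos_INR n). pose proof (pos_INR k).
    assert (Hp : INR (S n) <> 0) by (rewrite S_INR; lra).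
    assert (Hq : INR (S k) <> 0) by (rewrite S_INR; lra).
    unfold Delta_pq.
    rewrite (dexp_ext (S n) _ (fun mu => (INR k / (INR (S k) * INR (S (S k)))) *
        sumR (S n) (fun u => (nth u mu 0 - 1/INR (S n))^2))).
    - rewrite dexp. rewrite !S_INR. field. repeat split; lra.
    - intros mu.
      rewrite (dexp_ext (S k) _ (fun nu => sumR (S n) (fun u => (nth u mu 0 - 1/INR (S n))^2) *
          sumR (S k) (fun v => (nth v nu 0 - 1/INR (S k))^2))).
      + rewrite dexp. ring.
      + intros nu. apply factor; auto. }
  split; [exact HD|]. rewrite HD.
  assert (HP : 1 <= INR p) by (apply (le_INR 1); lia).
  assert (HQ : 1 <= INR q) by (apply (le_INR 1); lia).
  set (P := INR p) in *. set (Q := INR q) in *.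
  assert (HiP : 0 < / (P + 1)) by (apply Rinv_0_lt_compat; lra).
  assert (HiQ : 0 < / (Q + 1)) by (apply Rinv_0_lt_compat; lra).
  assert (EP : (P + 1) * / (P + 1) = 1) by (apply Rinv_r; lra).
  assert (EQ : (Q + 1) * / (Q + 1) = 1) by (apply Rinv_r; lra).
  assert (Hz : 0 < 1 / (P * Q)) by (unfold Rdiv; rewrite Rmult_1_l; apply Rinv_0_lt_compat; nra).
  unfold Rdiv at 2 3.
  set (x := (P - 1) * / (P + 1)). set (y := (Q - 1) * / (Q + 1)).
  assert (0 <= x <= 1) by (unfold x; split; nra).
  assert (0 <= y <= 1) by (unfold y; split; nra).
  set (z := 1 / (P * Q)) in *. clearbody x y z. assert (x*y <= 1) by nra. assert (z*(x*y) <= z*1) by (apply Rmult_le_compat_l; lra). rewrite Rmult_assoc. lra.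
Qed.
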